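(* Let $X$ be a finite connected poset and $K$ a field. For any $\theta\in\mathcal{M}(X)$ there exists a map $\sigma:X^2_<\to K^*$ compatible with $\theta$.
   Context: $X^2_<=\{(x,y)\in X^2: x<y\}$ and $K^*=K\setminus\{0\}$. For $x\le y$, $e_{xy}$ denotes the element of the incidence algebra $I(X,K)$ (functions $X\times X\to K$ vanishing off $\{x\le y\}$, with product $(fg)(x,y)=\sum_{x\le z\le y}f(x,z)g(z,y)$) equal to $1$ at $(x,y)$ and $0$ elsewhere; $B=\{e_{xy}:x<y\}$. For a bijection $\theta:B\to B$ and a maximal chain $C:u_1<\dots<u_m$, $\theta$ is increasing on $C$ if there is a maximal chain $D:v_1<\dots<v_m$ with $\theta(e_{u_iu_j})=e_{v_iv_j}$ for all $i<j$, decreasing if $\theta(e_{u_iu_j})=e_{v_{m-j+1}v_{m-i+1}}$ for all $i<j$. $\mathcal{M}(X)$ is the set of bijections $B\to B$ increasing or decreasing on every maximal chain. A map $\sigma:X^2_<\to K^*$ is compatible with a bijection $\theta:B\to B$ if, for all $x<y<z$, $\sigma(x,z)=\sigma(x,y)\sigma(y,z)$ whenever $\theta(e_{xz})=\theta(e_{xy})\theta(e_{yz})$, and $\sigma(x,z)=-\sigma(x,y)\sigma(y,z)$ whenever $\theta(e_{xz})=\theta(e_{yz})\theta(e_{xy})$ (products in $I(X,K)$). *)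

(* Defs.v *)
From HB Require Import structures.
From mathcomp Require Import all_boot all_order all_algebra.
Set Implicit Arguments. Unset Strict Implicit. Unset Printing Implicit Defensive.
Import Order.TTheory GRing.Theory.

Section Incidence.
Variables (d : Order.disp_t) (X : finPOrderType d) (K : fieldType).

Definition connected_poset : Prop :=
  forall x y : X, connect (fun a b : X => (a >=< b)%O) x y.

(* Elements of the incidence algebra I(X,K): functions X*X -> K
   (we only ever use ones vanishing off x <= y). *)
Definition incalg := {ffun X * X -> K}.

Definition incmul (f g : incalg) : incalg :=
  [ffun p : X * X => (\sum_(z : X | ((p.1 <= z)%O && (z <= p.2)%O))
                        f (p.1, z) * g (z, p.2))%R].

Definition e_ (x y : X) : incalg :=
  [ffun p : X * X => ((p.1 == x) && (p.2 == y))%:R%R].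

Definition ltpair := {p : X * X | (p.1 < p.2)%O}.

Definition eB (p : ltpair) : incalg := e_ (val p).1 (val p).2.

Definition is_chain (s : seq X) : Prop := sorted (fun a b : X => (a < b)%O) s.

Definition maximal_chain (s : seq X) : Prop :=
  is_chain s /\ forall t, is_chain t -> {subset s <= t} -> {subset t <= s}.

Definition increasing_on (theta : ltpair -> ltpair) (s : seq X) : Prop :=
  exists t : seq X, maximal_chain t /\ size t = size s /\
    forall (p : ltpair) (i j : nat), i < j < size s ->
      val p = (nth (val p).1 s i, nth (val p).1 s j) ->
      val (theta p) = (nth (val p).1 t i, nth (val p).1 t j).

(* theta decreasing on C: theta(e_{u_i u_j}) = e_{v_{m-j+1} v_{m-i+1}}
   (1-indexed), i.e. indices m-1-j, m-1-i when 0-indexed. *)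
Definition decreasing_on (theta : ltpair -> ltpair) (s : seq X) : Prop :=
  exists t : seq X, maximal_chain t /\ size t = size s /\
    forall (p : ltpair) (i j : nat), i < j < size s ->
      val p = (nth (val p).1 s i, nth (val p).1 s j) ->
      val (theta p) = (nth (val p).1 t (size s - j.+1),
                       nth (val p).1 t (size s - i.+1)).

Definition in_M (theta : ltpair -> ltpair) : Prop :=
  bijective theta /\
  forall s, maximal_chain s -> increasing_on theta s \/ decreasing_on theta s.

Definition compatible (sigma : ltpair -> K) (theta : ltpair -> ltpair) : Prop :=
  forall (x y z : X) (pxy pyz pxz : ltpair),
    val pxy = (x, y) -> val pyz = (y, z) -> val pxz = (x, z) ->
    (eB (theta pxz) = incmul (eB (theta pxy)) (eB (theta pyz)) ->
       sigma pxz = (sigma pxy * sigma pyz)%R) /\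
    (eB (theta pxz) = incmul (eB (theta pyz)) (eB (theta pxy)) ->
       sigma pxz = (- (sigma pxy * sigma pyz))%R).

End Incidence.

(* Main.v *)
Require Import Defs.
From HB Require Import structures.
From mathcomp Require Import all_boot all_order all_algebra.
From mathcomp Require Import zify.
From Stdlib Require Import Classical.
Set Implicit Arguments. Unset Strict Implicit. Unset Printing Implicit Defensive.
Import Order.TTheory.

Section Gen.
Variables (d : Order.disp_t) (X : finPOrderType d).

Lemma chain_uniq (s : seq X) : is_chain s -> uniq s.
Proof. exact: lt_sorted_uniq. Qed.

Lemma chain_lt_nth (s : seq X) x0 i j :
  is_chain s -> i < j -> j < size s -> (nth x0 s i < nth x0 s j)%O.
Proof.
move=> hs hij hj; apply: (sorted_ltn_nth lt_trans) => //; rewrite inE //.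
by apply: ltn_trans hj.
Qed.

Lemma chain_le_nth (s : seq X) x0 i j :
  is_chain s -> i <= j -> j < size s -> (nth x0 s i <= nth x0 s j)%O.
Proof.
move=> hs; rewrite leq_eqVlt => /orP [/eqP -> //|hij] hj.
by apply: ltW; apply: chain_lt_nth.
Qed.

Lemma chain_idx (s : seq X) x y :
  is_chain s -> x \in s -> y \in s -> (x < y)%O -> index x s < index y s.
Proof.
move=> hs hx hy hxy; rewrite ltnNge; apply/negP => hle.
have hxs : index x s < size s by rewrite index_mem.
have := chain_le_nth x hs hle hxs.
by rewrite !nth_index // => /(lt_le_trans hxy); rewrite ltxx.
Qed.

Lemma chain_cmp (s : seq X) x y :
  is_chain s -> x \in s -> y \in s -> (x >=< y)%O.
Proof.
move=> hs hx hy.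
have hxs : index x s < size s by rewrite index_mem.
have hys : index y s < size s by rewrite index_mem.
case: (leqP (index x s) (index y s)) => h.
  by apply: le_comparable; rewrite -(nth_index x hx) -(nth_index x hy); apply: chain_le_nth.
by apply: ge_comparable; rewrite -(nth_index x hx) -(nth_index x hy); apply: chain_le_nth => //; apply: ltnW.
Qed.

Lemma chain_of (s : seq X) : uniq s -> {in s &, forall x y, (x >=< y)%O} ->
  exists t, is_chain t /\ t =i s.
Proof.
move=> hu hc; exists (sort <=%O s); split; last exact: mem_sort.
rewrite /is_chain lt_sorted_uniq_le sort_uniq hu /=.
apply: (sort_sorted_in (P := mem s)); last by apply/allP.
by move=> x y hx hy; have := hc x y hx hy.
Qed.

Lemma max_mem (C : seq X) u : maximal_chain C ->
  (forall y, y \in C -> (u >=< y)%O) -> u \in C.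
Proof.
move=> [hC hmax] hu; apply/negPn/negP => hn.
have hU : uniq (u :: C) by rewrite /= hn chain_uniq.
have [t [ht et]] : exists t, is_chain t /\ t =i u :: C.
  apply: chain_of => // x y; rewrite !inE => /orP[/eqP->|hx] /orP[/eqP->|hy].
  - exact: comparablexx.
  - exact: hu.
  - by rewrite comparable_sym; apply: hu.
  - exact: chain_cmp hC hx hy.
have := hmax t ht; have hs : {subset C <= t} by move=> y hy; rewrite et inE hy orbT.
move=> /(_ hs u); rewrite et inE eqxx => /(_ isT); by rewrite (negbTE hn).
Qed.

Lemma not_max_grow (t : seq X) : is_chain t -> ~ maximal_chain t ->
  exists t', [/\ is_chain t', {subset t <= t'} & size t < size t' <= #|X|].
Proof.
move=> ht hm.
have [t' [ht' [htt' hn]]] : exists t', is_chain t' /\ {subset t <= t'} /\ ~ {subset t' <= t}.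
  apply: NNPP => hc; apply: hm; split => // t' ht' htt'.
  by apply: NNPP => hn; apply: hc; exists t'.
have [u [hu hut]] : exists u, u \in t' /\ u \notin t.
  apply: NNPP => hc; apply: hn => u hu; apply/negPn/negP => hn'; apply: hc; by exists u.
exists t'; split => //; apply/andP; split.
  have : uniq (u :: t) by rewrite /= hut chain_uniq.
  move=> /uniq_leq_size; apply => y; rewrite inE => /orP[/eqP->//|]; exact: htt'.
by rewrite -(card_uniqP (chain_uniq ht')) max_card.
Qed.

Lemma chain_ext (s : seq X) : is_chain s -> exists C, maximal_chain C /\ {subset s <= C}.
Proof.
move=> hs.
suff H : forall k t, is_chain t -> {subset s <= t} -> #|X| - size t <= k ->
   exists C, maximal_chain C /\ {subset s <= C}.
  by apply: (H #|X| s hs) => //; apply: leq_subr.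
elim=> [|k IH] t ht hst hk; case: (classic (maximal_chain t)) => hm;
  try by exists t.
- have [t' [_ _ /andP[h1 h2]]] := not_max_grow ht hm. exfalso. lia.
- have [t' [ht' htt' /andP[h1 h2]]] := not_max_grow ht hm.
  apply: (IH t' ht') => [y /hst /htt' //|]. lia.
Qed.
Definition hyb (C2 C1 : seq X) (b : X) :=
  [seq x <- C2 | (x <= b)%O] ++ [seq x <- C1 | (b < x)%O].

Lemma hyb_mem C2 C1 b u :
  (u \in hyb C2 C1 b) = ((u \in C2) && (u <= b)%O) || ((u \in C1) && (b < u)%O).
Proof. by rewrite /hyb mem_cat !mem_filter !(andbC (_ \in _)). Qed.

Lemma hyb_max C2 C1 b : maximal_chain C1 -> maximal_chain C2 ->
  b \in C1 -> b \in C2 -> maximal_chain (hyb C2 C1 b).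
Proof.
move=> hC1 hC2 hb1 hb2; have [c1 _] := hC1; have [c2 _] := hC2.
have hch : is_chain (hyb C2 C1 b).
  rewrite /is_chain sorted_pairwise; last exact: lt_trans.
  rewrite pairwise_cat; apply/and3P; split.
  + apply/allrelP => x y; rewrite !mem_filter => /andP[hx _] /andP[hy _].
    exact: le_lt_trans hx hy.
  + by apply: pairwise_filter; rewrite -sorted_pairwise //; exact: lt_trans.
  + by apply: pairwise_filter; rewrite -sorted_pairwise //; exact: lt_trans.
split => // t ht hsub u hu.
have hbt : b \in t by apply: hsub; rewrite hyb_mem hb2 lexx.
have hub := chain_cmp ht hu hbt.
rewrite hyb_mem; case: (comparable_ltgtP hub) => hcase /=.
- rewrite andbT andbF orbF.
  apply: max_mem => // y hy.
  have hyb' := chain_cmp c2 hy hb2.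
  case: (comparable_ltgtP hyb') => hyb2.
  + apply: chain_cmp ht hu _; apply: hsub; rewrite hyb_mem hy (ltW hyb2) //.
  + apply: le_comparable; apply: ltW; exact: lt_trans hcase hyb2.
  + apply: chain_cmp ht hu _; apply: hsub; rewrite hyb_mem hy hyb2 lexx //.
- rewrite andbT andbF /=.
  apply: max_mem => // y hy.
  have hyb' := chain_cmp c1 hy hb1.
  case: (comparable_ltgtP hyb') => hyb2.
  + apply: ge_comparable; apply: ltW; exact: lt_trans hyb2 hcase.
  + apply: chain_cmp ht hu _; apply: hsub; rewrite hyb_mem hy hyb2 orbT //.
  + apply: ge_comparable; rewrite hyb2; exact: ltW.
- by rewrite hcase hb2.
Qed.

Lemma head_min (t : seq X) x0 u : maximal_chain t -> 0 < size t ->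
  (u < nth x0 t 0)%O -> False.
Proof.
move=> ht hs hu; have [c _] := ht.
have : u \in t.
  apply: max_mem => // y hy; apply: le_comparable; apply: ltW.
  apply: (lt_le_trans hu); rewrite -(nth_index x0 hy); apply: chain_le_nth => //.
  by rewrite index_mem.
move=> hut; have := chain_le_nth x0 c (leq0n (index u t)); rewrite index_mem nth_index // => /(_ hut) h.
by move: (lt_le_trans hu h); rewrite ltxx.
Qed.

End Gen.

Section Th.
Variables (d : Order.disp_t) (X : finPOrderType d).
Variable theta : ltpair X -> ltpair X.
Hypothesis hM : in_M theta.

Definition th (x y : X) : X * X :=
  if (insub (x, y) : option (ltpair X)) is Some p then val (theta p) else (x, y).

Lemma thE (p : ltpair X) : th (val p).1 (val p).2 = val (theta p).
Proof. by rewrite /th -surjective_pairing valK. Qed.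

Lemma thE' x y (h : (x < y)%O) :
  th x y = val (theta (exist (fun q : X * X => (q.1 < q.2)%O) (x, y) h)).
Proof. by rewrite -thE. Qed.

Lemma core (C : seq X) : maximal_chain C -> exists (o : bool) (t : seq X),
  [/\ maximal_chain t, size t = size C &
   forall x0 i j, i < j -> j < size C ->
     th (nth x0 C i) (nth x0 C j) =
     if o then (nth x0 t (size C - j.+1), nth x0 t (size C - i.+1))
     else (nth x0 t i, nth x0 t j)].
Proof.
move=> hC; have [c _] := hC.
case: (hM.2 C hC) => [[t [ht [hs H]]]|[t [ht [hs H]]]]; [exists false|exists true];
  exists t; split => // x0 i j hij hj;
  have hxy : (nth x0 C i < nth x0 C j)%O by apply: chain_lt_nth.
- rewrite (thE' hxy) (H _ i j) /=; last first.
  + by rewrite /=; congr pair; apply: set_nth_default; lia.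
  + by rewrite hij hj.
  by congr pair; apply: set_nth_default; lia.
- rewrite (thE' hxy) (H _ i j) /=; last first.
  + by rewrite /=; congr pair; apply: set_nth_default; lia.
  + by rewrite hij hj.
  by congr pair; apply: set_nth_default; lia.
Qed.

Definition D (x y z : X) : bool := (th x z).1 == (th y z).1.

Definition posprop (C t : seq X) (o : bool) :=
   forall x0 i j, i < j -> j < size C ->
     th (nth x0 C i) (nth x0 C j) =
     if o then (nth x0 t (size C - j.+1), nth x0 t (size C - i.+1))
     else (nth x0 t i, nth x0 t j).

Lemma coreD (C t : seq X) o : maximal_chain C -> maximal_chain t -> size t = size C ->
  posprop C t o -> forall x y z, x \in C -> y \in C -> z \in C ->
  (x < y)%O -> (y < z)%O -> D x y z = o /\ ((th x z).1 == (th x y).1) = ~~ o.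
Proof.
move=> [hC _] [ht _] hs H x y z hx hy hz hxy hyz.
pose x0 := x.
have hij := chain_idx hC hx hy hxy; have hjk := chain_idx hC hy hz hyz.
have hk : index z C < size C by rewrite index_mem.
have ex : nth x0 C (index x C) = x by rewrite nth_index.
have ey : nth x0 C (index y C) = y by rewrite nth_index.
have ez : nth x0 C (index z C) = z by rewrite nth_index.
rewrite /D -ex -ey -ez.
have hik : index x C < index z C by apply: ltn_trans hjk.
rewrite (H x0 _ _ hik hk) (H x0 _ _ hjk hk) (H x0 _ _ hij (ltn_trans hjk hk)).
have hu := chain_uniq ht.
clear H; case: o => /=; split; rewrite ?eqxx //. all: rewrite nth_uniq ?hs //; try lia.
Qed.

Lemma chainD (C : seq X) : maximal_chain C -> exists o : bool,
  forall x y z, x \in C -> y \in C -> z \in C ->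
  (x < y)%O -> (y < z)%O -> D x y z = o /\ ((th x z).1 == (th x y).1) = ~~ o.
Proof.
move=> hC; have [o [t [ht hs H]]] := core hC; exists o; exact: (coreD hC ht hs H).
Qed.

Lemma tri x y z : (x < y)%O -> (y < z)%O -> ((th x z).1 == (th x y).1) = ~~ D x y z.
Proof.
move=> hxy hyz.
have hc : is_chain [:: x; y; z] by rewrite /is_chain /= hxy hyz.
have [C [hC hsub]] := chain_ext hc.
have [o Ho] := chainD hC.
have hx : x \in C by apply: hsub; rewrite !inE eqxx.
have hy : y \in C by apply: hsub; rewrite !inE eqxx !orbT.
have hz : z \in C by apply: hsub; rewrite !inE eqxx !orbT.
have [h1 h2] := Ho x y z hx hy hz hxy hyz.
by rewrite h1 h2.
Qed.

Lemma four e x y z : (e < x)%O -> (x < y)%O -> (y < z)%O ->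
  D e x y = D x y z /\ D e x z = D x y z.
Proof.
move=> hex hxy hyz.
have hc : is_chain [:: e; x; y; z] by rewrite /is_chain /= hex hxy hyz.
have [C [hC hsub]] := chain_ext hc.
have [o Ho] := chainD hC.
have he : e \in C by apply: hsub; rewrite !inE eqxx.
have hx : x \in C by apply: hsub; rewrite !inE eqxx !orbT.
have hy : y \in C by apply: hsub; rewrite !inE eqxx !orbT.
have hz : z \in C by apply: hsub; rewrite !inE eqxx !orbT.
rewrite (Ho x y z hx hy hz hxy hyz).1 (Ho e x y he hx hy hex hxy).1.
by rewrite (Ho e x z he hx hz hex (lt_trans hxy hyz)).1.
Qed.

Lemma only_c C1 C2 a b c e : maximal_chain C1 -> maximal_chain C2 ->
  a \in C1 -> b \in C1 -> c \in C1 -> e \in C2 -> b \in C2 -> c \in C2 ->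
  (a < b)%O -> (b < c)%O -> (e < b)%O -> D e b c != D a b c ->
  forall u, u \in C1 -> (b < u)%O -> u = c.
Proof.
move=> hC1 hC2 ha1 hb1 hc1 he2 hb2 hc2 hab hbc heb hne u hu hbu.
have hC3 := hyb_max hC1 hC2 hb1 hb2.
have [o1 Ho1] := chainD hC1.
have [o3 Ho3] := chainD hC3.
have e1 := (Ho1 a b c ha1 hb1 hc1 hab hbc).1.
have he3 : e \in hyb C2 C1 b by rewrite hyb_mem he2 (ltW heb).
have hb3 : b \in hyb C2 C1 b by rewrite hyb_mem hb2 lexx.
have hc3 : c \in hyb C2 C1 b by rewrite hyb_mem hc1 hbc orbT.
have hu3 : u \in hyb C2 C1 b by rewrite hyb_mem hu hbu orbT.
have e3 := (Ho3 e b c he3 hb3 hc3 heb hbc).1.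
have hne' : o1 != o3 by rewrite -e1 -e3 eq_sym.
have [C1c _] := hC1.
case: (comparable_ltgtP (chain_cmp C1c hu hc1)) => huc //.
- have f1 := (Ho1 b u c hb1 hu hc1 hbu huc).1.
  have f3 := (Ho3 b u c hb3 hu3 hc3 hbu huc).1.
  by move: hne'; rewrite -f1 -f3 eqxx.
- have f1 := (Ho1 b c u hb1 hc1 hu hbc huc).1.
  have f3 := (Ho3 b c u hb3 hc3 hu3 hbc huc).1.
  by move: hne'; rewrite -f1 -f3 eqxx.
Qed.

Lemma last_two (C : seq X) b c : is_chain C -> b \in C -> c \in C -> (b < c)%O ->
  (forall u, u \in C -> (b < u)%O -> u = c) ->
  index c C = (index b C).+1 /\ (index c C).+1 = size C.
Proof.
move=> hC hb hc hbc honly.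
have hk : index c C < size C by rewrite index_mem.
have hjk := chain_idx hC hb hc hbc.
split.
- apply/eqP; rewrite eqn_leq hjk andbT leqNgt; apply/negP => h.
  have hm : nth c C (index b C).+1 \in C by apply: (mem_nth c); exact: ltn_trans h hk.
  have h1 : (nth c C (index b C) < nth c C (index b C).+1)%O by apply: chain_lt_nth => //; lia.
  have h2 : (nth c C (index b C).+1 < nth c C (index c C))%O by apply: chain_lt_nth => //; lia.
  rewrite nth_index // in h1; rewrite nth_index // in h2.
  by move: h2; rewrite (honly _ hm h1) ltxx.
- apply/eqP; rewrite eqn_leq hk /= leqNgt; apply/negP => h.
  have hm : nth c C (index c C).+1 \in C by apply: (mem_nth c); exact: h.
  have h2 : (nth c C (index c C) < nth c C (index c C).+1)%O by apply: chain_lt_nth => //; lia.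
  rewrite nth_index // in h2.
  by move: (h2); rewrite {1}(honly _ hm (lt_trans hbc h2)) ltxx.
Qed.

Lemma final C1 t1 C2 t2 a b c : maximal_chain C1 -> maximal_chain t1 -> size t1 = size C1 ->
  posprop C1 t1 false -> maximal_chain C2 -> maximal_chain t2 -> size t2 = size C2 ->
  posprop C2 t2 true -> a \in C1 -> b \in C1 -> c \in C1 -> b \in C2 -> c \in C2 ->
  (a < b)%O -> (b < c)%O ->
  index c C1 = (index b C1).+1 -> (index c C1).+1 = size C1 ->
  index c C2 = (index b C2).+1 -> (index c C2).+1 = size C2 -> False.
Proof.
move=> hC1 ht1 hs1 H1 hC2 ht2 hs2 H2 ha1 hb1 hc1 hb2 hc2 hab hbc i1 s1 i2 s2.
have [C1c _] := hC1; have [C2c _] := hC2; have [t1c _] := ht1.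
have hia := chain_idx C1c ha1 hb1 hab.
have E1 := H1 b (index b C1) (index c C1).
have E2 := H2 b (index b C2) (index c C2).
rewrite !nth_index // in E1 E2.
have E1' := E1 ltac:(lia) ltac:(lia).
have E2' := E2 ltac:(lia) ltac:(lia).
rewrite E1' in E2'; case: E2' => h _.
have e0 : size C2 - (index c C2).+1 = 0 by lia.
rewrite e0 in h.
apply: (head_min (x0 := b) (u := nth b t1 (index b C1).-1) ht2); first by lia.
rewrite -h; apply: chain_lt_nth => //; lia.
Qed.

Lemma LB a b c e : (a < b)%O -> (b < c)%O -> (e < b)%O -> D e b c = D a b c.
Proof.
move=> hab hbc heb.
case: (boolP (D e b c == D a b c)) => [/eqP //|hne]; exfalso.
have hc1 : is_chain [:: a; b; c] by rewrite /is_chain /= hab hbc.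
have hc2 : is_chain [:: e; b; c] by rewrite /is_chain /= heb hbc.
have [C1 [hC1 hsub1]] := chain_ext hc1.
have [C2 [hC2 hsub2]] := chain_ext hc2.
have ha1 : a \in C1 by apply: hsub1; rewrite !inE eqxx.
have hb1 : b \in C1 by apply: hsub1; rewrite !inE eqxx !orbT.
have hcc1 : c \in C1 by apply: hsub1; rewrite !inE eqxx !orbT.
have he2 : e \in C2 by apply: hsub2; rewrite !inE eqxx.
have hb2 : b \in C2 by apply: hsub2; rewrite !inE eqxx !orbT.
have hcc2 : c \in C2 by apply: hsub2; rewrite !inE eqxx !orbT.
have O1 := only_c hC1 hC2 ha1 hb1 hcc1 he2 hb2 hcc2 hab hbc heb hne.
have O2 := only_c hC2 hC1 he2 hb2 hcc2 ha1 hb1 hcc1 heb hbc hab ltac:(by rewrite eq_sym).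
have [C1c _] := hC1; have [C2c _] := hC2.
have [i1 s1] := last_two C1c hb1 hcc1 hbc O1.
have [i2 s2] := last_two C2c hb2 hcc2 hbc O2.
have [o1 [t1 [ht1 hs1 H1]]] := core hC1.
have [o2 [t2 [ht2 hs2 H2]]] := core hC2.
have d1 := (coreD hC1 ht1 hs1 H1 ha1 hb1 hcc1 hab hbc).1.
have d2 := (coreD hC2 ht2 hs2 H2 he2 hb2 hcc2 heb hbc).1.
move: hne; rewrite d1 d2.
case: o1 H1 {d1} => H1; case: o2 H2 {d2} => H2 // _.
- exact: (final hC2 ht2 hs2 H2 hC1 ht1 hs1 H1 he2 hb2 hcc2 hb1 hcc1 heb hbc i2 s2 i1 s1).
- exact: (final hC1 ht1 hs1 H1 hC2 ht2 hs2 H2 ha1 hb1 hcc1 hb2 hcc2 hab hbc i1 s1 i2 s2).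
Qed.

End Th.

Import GRing.Theory.

Section Main.
Variables (d : Order.disp_t) (X : finPOrderType d) (K : fieldType).
Variable theta : ltpair X -> ltpair X.
Hypothesis hM : in_M theta.

Definition sS (x y : X) : bool := [exists e, (e < x)%O && D theta e x y].

Lemma sS_key x y z : (x < y)%O -> (y < z)%O ->
  sS x z = sS x y (+) sS y z (+) D theta x y z.
Proof.
move=> hxy hyz.
have Hyz : sS y z = D theta x y z.
  apply/idP/idP.
  - by move=> /existsP[e /andP[hey he]]; rewrite -(LB hM hxy hyz hey).
  - by move=> h; apply/existsP; exists x; rewrite hxy.
rewrite Hyz.
case: (boolP [exists e, (e < x)%O]) => [/existsP[e hex]|hn].
- have Hxy : sS x y = D theta x y z.
    apply/idP/idP.
    + by move=> /existsP[e' /andP[he' h]]; rewrite -(four hM he' hxy hyz).1.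
    + by move=> h; apply/existsP; exists e; rewrite hex (four hM hex hxy hyz).1.
  have Hxz : sS x z = D theta x y z.
    apply/idP/idP.
    + by move=> /existsP[e' /andP[he' h]]; rewrite -(four hM he' hxy hyz).2.
    + by move=> h; apply/existsP; exists e; rewrite hex (four hM hex hxy hyz).2.
  by rewrite Hxy Hxz; case: (D theta x y z).
- have F : forall w, sS x w = false.
    move=> w; apply/negbTE/negP => /existsP[e /andP[he _]].
    by move/negP: hn; apply; apply/existsP; exists e.
  by rewrite !F /=; case: (D theta x y z).
Qed.

Local Open Scope ring_scope.
Definition sg (b : bool) : K := if b then -1 else 1.

Lemma sgX a b : sg (a (+) b) = sg a * sg b.
Proof. by case: a; case: b; rewrite /sg /= ?mulrNN ?mulr1 ?mul1r. Qed.

Lemma sgN a : sg (~~ a) = - sg a.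
Proof. by case: a; rewrite /sg /= ?opprK. Qed.

Lemma eB_mul (q r w : ltpair X) :
  eB K q = incmul (eB K r) (eB K w) -> (val q).1 = (val r).1.
Proof.
move=> /(congr1 (fun f : incalg X K => f (val q))).
rewrite /eB /e_ /incmul !ffunE /= !eqxx /=.
case: (eqVneq (val q).1 (val r).1) => // hne.
rewrite big1 => [|z _]; last by rewrite ffunE /= (negbTE hne) /= mul0r.
by move/eqP; rewrite oner_eq0.
Qed.

End Main.

Theorem lemma2p8 (d : Order.disp_t) (X : finPOrderType d) (K : fieldType)
  (hX : connected_poset X) (theta : ltpair X -> ltpair X)
  (htheta : in_M theta) :
  exists sigma : ltpair X -> K,
    (forall p, sigma p != 0%R) /\ compatible sigma theta.
Proof.
exists (fun p => sg K (sS theta (val p).1 (val p).2)); split.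
- by move=> p; rewrite /sg; case: ifP => _; rewrite ?oppr_eq0 oner_eq0.
- move=> x y z pxy pyz pxz Exy Eyz Exz.
  have hxy : (x < y)%O by move: (valP pxy); rewrite Exy.
  have hyz : (y < z)%O by move: (valP pyz); rewrite Eyz.
  have thxz : (val (theta pxz)).1 = (th theta x z).1 by rewrite -(thE theta pxz) Exz.
  have thxy : (val (theta pxy)).1 = (th theta x y).1 by rewrite -(thE theta pxy) Exy.
  have thyz : (val (theta pyz)).1 = (th theta y z).1 by rewrite -(thE theta pyz) Eyz.
  have T := tri htheta hxy hyz.
  rewrite Exy Eyz Exz /= (sS_key htheta hxy hyz) !sgX.
  split => h.
  + have := eB_mul h; rewrite thxz thxy => e.
    rewrite e eqxx in T.
    have -> : D theta x y z = false by move: T; case: (D theta x y z).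
    by rewrite /sg mulr1.
  + have := eB_mul h; rewrite thxz thyz => e.
    have -> : D theta x y z = true by rewrite /D e eqxx.
    by rewrite /sg mulrN1.
Qed.
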